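(* Given a schedule $\sigma$ of $n$ jobs on two machines and $k\ge1$, one run of the randomized $k$-swap algorithm terminates in $O(k\cdot n^{\lceil k/2\rceil}\cdot\log n)$ steps.
   Context: Problem $P2\|C_{\max}$: $n$ jobs with processing times $p_j>0$, two identical machines. A schedule $\sigma=(M_1,M_2)$ partitions the jobs; loads $L_i=\sum_{j\in M_i}p_j$, $\Delta=\max_iL_i-\min_iL_i$; label machines so that machine 1 has maximum load. Randomized $k$-swap algorithm: (1) assign each job independently and uniformly at random to $A$ or $B$; (2) for every $S_1\subseteq A$ with $|S_1|=\lceil k/2\rceil$ put $\sum_{j\in S_1\cap M_1}p_j-\sum_{j\in S_1\cap M_2}p_j$ (with reference to $S_1$) into $A_\Sigma$; (3) for every $S_2\subseteq B$ with $|S_2|=\lfloor k/2\rfloor$ put $\sum_{j\in S_2\cap M_1}p_j-\sum_{j\in S_2\cap M_2}p_j$ into $B_\Sigma$; (4) sort $B_\Sigma$ non-decreasingly; (5) for each $x\in A_\Sigma$ binary-search for $y\in B_\Sigma$ with $-x<y<\Delta-x$; if found, interchange the machine assignments of the jobs of the corresponding $S_1\cup S_2$ and return True; (6) otherwise return False. Steps are elementary operations (including arithmetic and comparisons on processing times) of unit cost. *)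

(* Defs.v *)
(* A cost-instrumented model of one run of the randomized
   k-swap algorithm for P2||Cmax.  Every function returns its result paired
   with the number of elementary (unit-cost) operations it performs:
   arithmetic operations / comparisons on processing times, comparisons and
   arithmetic on indices, branch decisions, coin flips, array accesses and
   construction of list cells.  Constant factors are immaterial. *)
From HB Require Import structures.
From mathcomp Require Import all_boot all_order all_algebra.
Set Implicit Arguments. Unset Strict Implicit. Unset Printing Implicit Defensive.
Import Order.TTheory GRing.Theory Num.Theory.

(* Jobs are the indices 0 .. n-1; [p j] is the processing time of job j,
   [sched j] tells on which machine (labelled true / false) job j is in sigma. *)

Fixpoint loads {R : realDomainType} (p : nat -> R) (sched : nat -> bool)
    (js : seq nat) : R * R * nat :=
  match js with
  | [::] => (0%R, 0%R, 0)
  | j :: js' =>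
      let: (a, b, c) := loads p sched js' in
      if sched j then ((a + p j)%R, b, c + 2) else (a, (b + p j)%R, c + 2)
  end.

Fixpoint choose (s : seq nat) (h : nat) {struct s} : seq (seq nat) * nat :=
  match h with
  | 0 => ([:: [::]], 1)
  | h'.+1 =>
      match s with
      | [::] => ([::], 1)
      | x :: s' =>
          let: (l1, c1) := choose s' h' in
          let: (l2, c2) := choose s' h in
          (map (cons x) l1 ++ l2, c1 + c2 + 2 * size l1 + 1)
      end
  end.

(* sum_{j in S} w j, where w j = p j if j on machine 1, - p j otherwise *)
Fixpoint signed_sum {R : realDomainType} (w : nat -> R) (U : seq nat) : R * nat :=
  match U with
  | [::] => (0%R, 1)
  | j :: U' => let: (v, c) := signed_sum w U' in ((w j + v)%R, c + 2)
  end.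

(* the multiset A_Sigma / B_Sigma: values with reference to their subset *)
Fixpoint weigh {R : realDomainType} (w : nat -> R) (ss : seq (seq nat))
    : seq (R * seq nat) * nat :=
  match ss with
  | [::] => ([::], 1)
  | T :: ss' =>
      let: (v, c) := signed_sum w T in
      let: (l, c') := weigh w ss' in
      ((v, T) :: l, c + c' + 1)
  end.

Fixpoint merge_c {R : realDomainType} {T : Type} (s1 : seq (R * T))
    : seq (R * T) -> seq (R * T) * nat :=
  if s1 is x1 :: s1' then
    let fix merge_s1 (s2 : seq (R * T)) :=
      if s2 is x2 :: s2' then
        if (x1.1 <= x2.1)%R then
          let: (r, c) := merge_c s1' s2 in (x1 :: r, c + 2)
        else
          let: (r, c) := merge_s1 s2' in (x2 :: r, c + 2)
      else (s1, 1) in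
    merge_s1
  else fun s2 => (s2, 1).

Fixpoint split_c {A : Type} (s : seq A) : seq A * seq A * nat :=
  match s with
  | x :: y :: s' => let: (a, b, c) := split_c s' in (x :: a, y :: b, c + 2)
  | _ => (s, [::], 1)
  end.

(* fuel = size of the list is always sufficient *)
Fixpoint msort_c {R : realDomainType} {T : Type} (fuel : nat) (s : seq (R * T))
    : seq (R * T) * nat :=
  match fuel with
  | 0 => (s, 1)
  | fuel'.+1 =>
      match s with
      | [::] => (s, 1)
      | [:: _] => (s, 1)
      | _ =>
          let: (a, b, c0) := split_c s in
          let: (a', c1) := msort_c fuel' a in
          let: (b', c2) := msort_c fuel' b in
          let: (r, c3) := merge_c a' b' in
          (r, c0 + c1 + c2 + c3 + 1)
      end
  end.

(* binary search in the sorted array b (random access of unit cost) for the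
   first index in [lo, hi) whose value is > t; fuel = size b + 1 suffices. *)
Fixpoint bsearch {R : realDomainType} {T : Type} (b : seq (R * T)) (d : R * T)
    (fuel : nat) (t : R) (lo hi : nat) : nat * nat :=
  match fuel with
  | 0 => (lo, 1)
  | f.+1 =>
      if lo < hi then
        let mid := (lo + hi)./2 in
        if (t < (nth d b mid).1)%R then
          let: (r, c) := bsearch b d f t lo mid in (r, c + 6)
        else
          let: (r, c) := bsearch b d f t mid.+1 hi in (r, c + 6)
      else (lo, 1)
  end.

Fixpoint search {R : realDomainType} (bS : seq (R * seq nat)) (Delta : R)
    (aS : seq (R * seq nat)) : option (seq nat * seq nat) * nat :=
  match aS with
  | [::] => (None, 1)
  | (x, S1) :: aS' =>
      let: (i, c) := bsearch bS (0%R, [::]) (size bS).+1 (- x)%R 0 (size bS) in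
      if (i < size bS) && ((nth (0%R, [::]) bS i).1 < Delta - x)%R then
        (Some (S1, (nth (0%R, [::]) bS i).2), c + 5)
      else
        let: (r, c') := search bS Delta aS' in (r, c + c' + 5)
  end.

(* One run of the randomized k-swap algorithm on the schedule [sched] of the
   jobs 0..n-1, with coin outcomes [rnd] (rnd j = true : job j put in A). *)
Definition kswap_run {R : realDomainType} (n k : nat) (p : nat -> R)
    (sched rnd : nat -> bool) : bool * (nat -> bool) * nat :=
  let: (a, b, c0) := loads p sched (iota 0 n) in
  (* relabel: the machine labelled [top] is machine 1 (maximum load) *)
  let top := (b <= a)%R in
  let Delta := if top then (a - b)%R else (b - a)%R in
  let w j := if sched j == top then p j else (- p j)%R in
  (* step (1): n coin flips and the construction of A and B *)
  let As := [seq j <- iota 0 n | rnd j] in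
  let Bs := [seq j <- iota 0 n | ~~ rnd j] in
  let c1 := 2 * n in
  let: (ssA, c2) := choose As (uphalf k) in
  let: (ssB, c3) := choose Bs k./2 in
  let: (aS, c4) := weigh w ssA in
  let: (bS0, c5) := weigh w ssB in
  let: (bS, c6) := msort_c (size bS0) bS0 in
  let: (res, c7) := search bS Delta aS in
  let cost0 := c0 + 2 + c1 + c2 + c3 + c4 + c5 + c6 + c7 in
  match res with
  | Some (S1, S2) =>
      (true, (fun j => if j \in S1 ++ S2 then ~~ sched j else sched j),
       cost0 + size S1 + size S2 + 1)
  | None => (false, sched, cost0 + 1)
  end.

(* Main.v *)
Require Import Defs.
From HB Require Import structures.
From mathcomp Require Import all_boot all_order all_algebra.
From mathcomp Require Import zify.

Lemma expmono m n e : m <= n -> m ^ e <= n ^ e.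
Proof. by case: e => [|e] // H; rewrite leq_exp2r. Qed.

Fixpoint gs (m h : nat) : nat := if h is h'.+1 then gs m h' + m ^ h else 1.

Lemma gsS m h : gs m h.+1 = gs m h + m ^ h.+1.
Proof. by []. Qed.
Lemma gs0 m : gs m 0 = 1.
Proof. by []. Qed.

Lemma gs_ge_pow m h : m ^ h <= gs m h.
Proof. by case: h => [|h] //=; rewrite leq_addl. Qed.

Lemma gs_gt0 m h : 0 < gs m h.
Proof. elim: h => //= h IH; lia. Qed.
Arguments gs : simpl never.

Lemma gs_split m h : gs m h.+1 + gs m h <= gs m.+1 h.+1.
Proof.
elim: h => [|h IH]; first by rewrite !gsS !gs0 !expn1; lia.
have e1 := gsS m h.+1; have e2 := gsS m.+1 h.+1; have e3 := gsS m h.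
have : m ^ h.+2 + m ^ h.+1 <= m.+1 ^ h.+2.
  rewrite [m.+1 ^ _]expnS [m ^ h.+2]expnS.
  rewrite addnC -mulSn leq_mul2l /=.
  by rewrite leq_exp2r.
lia.
Qed.

Lemma gs_mono m m' h : m <= m' -> gs m h <= gs m' h.
Proof.
move=> H; elim: h => // h IH; rewrite !gsS; apply: leq_add => //.
by rewrite leq_exp2r.
Qed.

Lemma gs_le2 m h : 1 < m -> gs m h <= 2 * m ^ h.
Proof.
move=> Hm; elim: h => [|h IH] //.
rewrite gsS expnS; nia.
Qed.

Lemma choose_size s h : size (Defs.choose s h).1 <= size s ^ h.
Proof.
elim: s h => [|x s IH] [|h] //=.
case E1: (Defs.choose s h) => [l1 c1]; case E2: (Defs.choose s h.+1) => [l2 c2] /=.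
have := IH h; have := IH h.+1; rewrite E1 E2 /= => H2 H1.
rewrite size_cat size_map expnS.
apply: (leq_trans (leq_add H1 H2)).
rewrite expnS -[X in X + _]mul1n -mulnDl. idtac.
by rewrite add1n leq_mul2l expmono ?orbT.
Qed.

Lemma choose_all s h : all (fun T => size T == h) (Defs.choose s h).1.
Proof.
elim: s h => [|x s IH] [|h] //=.
case E1: (Defs.choose s h) => [l1 c1]; case E2: (Defs.choose s h.+1) => [l2 c2] /=.
have := IH h; have := IH h.+1; rewrite E1 E2 /= => H2 H1.
rewrite all_cat H2 andbT all_map.
by apply: sub_all H1 => T /=.
Qed.

Lemma choose_cost s h : (Defs.choose s h).2 < 2 * h.+1 * gs (size s) h.
Proof.
elim: s h => [|x s IH] [|h] /=.
- by [].
- have := gs_gt0 0 h.+1; lia.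
- have := gs_gt0 (size s).+1 0; lia.
case E1: (Defs.choose s h) => [l1 c1]; case E2: (Defs.choose s h.+1) => [l2 c2] /=.
have := IH h; have := IH h.+1; have := choose_size s h.
rewrite E1 E2 /= => Hs H2 H1.
have := gs_split (size s) h.
have := gs_ge_pow (size s) h.
nia.
Qed.

Section Alg.
Variable R : realDomainType.

Lemma signed_sum_cost (w : nat -> R) U : (signed_sum w U).2 = 2 * size U + 1.
Proof.
elim: U => //= j U; case: signed_sum => v c /= ->; lia.
Qed.

Lemma weigh_map (w : nat -> R) ss : map snd (weigh w ss).1 = ss.
Proof.
elim: ss => //= T ss; case: signed_sum => v c; case: weigh => l c' /= -> //.
Qed.

Lemma weigh_cost (w : nat -> R) ss h : all (fun T => size T == h) ss ->
  (weigh w ss).2 = size ss * (2 * h + 2) + 1.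
Proof.
elim: ss => //= T ss IH /andP [/eqP HT Hs].
have := signed_sum_cost w T; case: signed_sum => v c /= ->.
have := IH Hs; case: weigh => l c' /= ->; rewrite HT; lia.
Qed.

Variable T : Type.
Implicit Types s : seq (R * T).

Lemma merge_cc x1 s1 x2 s2 : merge_c (x1 :: s1) (x2 :: s2) =
  if (x1.1 <= x2.1)%R then
    let: (r, c) := merge_c s1 (x2 :: s2) in (x1 :: r, c + 2)
  else
    let: (r, c) := merge_c (x1 :: s1) s2 in (x2 :: r, c + 2).
Proof. by []. Qed.

Lemma merge_prop (P : pred (R * T)) s1 s2 :
  [/\ size (merge_c s1 s2).1 = size s1 + size s2,
      (merge_c s1 s2).2 <= 2 * (size s1 + size s2) + 1
    & all P s1 -> all P s2 -> all P (merge_c s1 s2).1].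
Proof.
elim: s1 s2 => [|x1 s1 IH1] s2.
  by split => //=; try lia; move=> _ ->.
elim: s2 => [|x2 s2 IH2].
  by split => //=; try lia; move=> ->.
rewrite merge_cc; case: ifP => _.
  case: (merge_c s1 (x2 :: s2)) (IH1 (x2 :: s2)) => r c /= [H1 H2 H3].
  split => /=; first by rewrite H1.
    lia.
  by move=> /andP [-> A1] A2; rewrite H3.
case: (merge_c (x1 :: s1) s2) IH2 => r c /= [H1 H2 H3].
split => /=; first by rewrite H1 /=; lia.
  lia.
by move=> A1 /andP [-> A2]; rewrite H3.
Qed.

Definition split_Q (P : pred (R * T)) s :=
  let: (a, b, c) := split_c s in
  [/\ size a = uphalf (size s), size b = (size s)./2, c = 2 * (size s)./2 + 1
    & all P s -> all P a && all P b].

Lemma split_prop (P : pred (R * T)) s : split_Q P s.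
Proof.
suff: split_Q P s /\ forall x, split_Q P (x :: s) by case.
elim: s => [|y s [IH1 IH2]].
  by split => [|x]; split => //= /andP [-> _].
split; first exact: IH2.
move=> x; move: IH1; rewrite /split_Q /=.
case: (split_c s) => [[a b] c] /= [H1 H2 H3 H4].
split => /=; [by rewrite H1 | by rewrite H2 | by rewrite H3; lia|].
by case/and3P=> -> -> /H4 /andP [-> ->].
Qed.

Lemma msort_eq f s : 1 < size s -> msort_c f.+1 s =
  let: (a, b, c0) := split_c s in
  let: (a', c1) := msort_c f a in
  let: (b', c2) := msort_c f b in
  let: (r, c3) := merge_c a' b' in
  (r, c0 + c1 + c2 + c3 + 1).
Proof. by case: s => [|x [|y s]]. Qed.

Lemma msort_small f s : size s <= 1 -> msort_c f s = (s, 1).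
Proof. by case: f => [|f]; case: s => [|x [|y s]]. Qed.

Lemma msort_prop (P : pred (R * T)) f s :
  size (msort_c f s).1 = size s /\ (all P s -> all P (msort_c f s).1).
Proof.
elim: f s => [|f IH] s; first by [].
case: (leqP (size s) 1) => Hs; first by rewrite msort_small.
rewrite msort_eq //.
have := split_prop P s; rewrite /split_Q.
case: (split_c s) => [[a b] c0] [Ha Hb _ Hab].
case: (msort_c f a) (IH a) => a' c1 /= [Sa Pa].
case: (msort_c f b) (IH b) => b' c2 /= [Sb Pb].
have := merge_prop P a' b'.
case: (merge_c a' b') => r c3 /= [S1 _ P1].
split; first by rewrite S1 Sa Sb Ha Hb; have := uphalf_half (size s); have := odd_double_half (size s); lia.
by move=> /Hab /andP [/Pa A /Pb B]; apply: P1.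
Qed.

Lemma msort_cost e f s : size s <= f -> size s <= 2 ^ e ->
  (msort_c f s).2 <= 6 * size s * e + 1.
Proof.
elim: e f s => [|e IH] f s Hf He.
  by rewrite expn0 in He; rewrite msort_small //=; lia.
case: (leqP (size s) 1) => Hs; first by rewrite msort_small //=; lia.
case: f Hf => [|f] Hf; first by lia.
rewrite msort_eq //.
have := split_prop predT s; rewrite /split_Q.
case: (split_c s) => [[a b] c0] [Ha Hb Hc _].
have Hsz := uphalf_half (size s); have Hsz2 := odd_double_half (size s).
have E : 2 ^ e.+1 = 2 * 2 ^ e by rewrite expnS.
have [Sa _] := msort_prop predT f a.
have [Sb _] := msort_prop predT f b.
have Ca := IH f a ltac:(lia) ltac:(lia).
have Cb := IH f b ltac:(lia) ltac:(lia).
case: (msort_c f a) Sa Ca => a' c1 /= Sa Ca.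
case: (msort_c f b) Sb Cb => b' c2 /= Sb Cb.
have [_ C3 _] := merge_prop predT a' b'.
case: (merge_c a' b') C3 => r c3 /= C3.
nia.
Qed.

Lemma bsearch_cost (b : seq (R * T)) d t e f lo hi : hi - lo < 2 ^ e ->
  (bsearch b d f t lo hi).2 <= 6 * e + 1.
Proof.
elim: e f lo hi => [|e IH] [|f] lo hi H //=.
  by rewrite expn0 in H; case: ifP => //; lia.
have E : 2 ^ e.+1 = 2 * 2 ^ e by rewrite expnS.
case: ifP => // Hlo.
have Hm := odd_double_half (lo + hi).
case: ifP => _.
  have := IH f lo (lo + hi)./2 ltac:(lia).
  case: bsearch => r c /=; lia.
have := IH f (lo + hi)./2.+1 hi ltac:(lia).
case: bsearch => r c /=; lia.
Qed.

End Alg.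

Lemma search_cons (R : realDomainType) (bS aS : seq (R * seq nat)) D x S1 :
  search bS D ((x, S1) :: aS) =
      let: (i, c) := bsearch bS (0%R, [::]) (size bS).+1 (- x)%R 0 (size bS) in
      if (i < size bS) && ((nth (0%R, [::]) bS i).1 < D - x)%R then
        (Some (S1, (nth (0%R, [::]) bS i).2), c + 5)
      else
        let: (r, c') := search bS D aS in (r, c + c' + 5).
Proof. by []. Qed.

Lemma search_prop (R : realDomainType) (bS aS : seq (R * seq nat)) D e h1 h2 :
  size bS < 2 ^ e ->
  all (fun x => size x.2 <= h1) aS -> all (fun x => size x.2 <= h2) bS ->
  (search bS D aS).2 <= size aS * (6 * e + 6) + 1 /\
  (forall S1 S2, (search bS D aS).1 = Some (S1, S2) -> size S1 + size S2 <= h1 + h2).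
Proof.
move=> Hb; elim: aS => [|[x S1] aS IH]; first by split.
rewrite search_cons; move=> /andP [HS1 HaS] HbS.
change (size ((x, S1) :: aS)) with (size aS).+1.
have := @bsearch_cost R (seq nat) bS (0%R, [::]) (- x)%R e (size bS).+1 0 (size bS) ltac:(lia).
case: bsearch => i c /= Hc.
case: ifP => [/andP [Hi _]|_].
  split; first by rewrite /=; nia.
  move=> S1' S2' [<- <-].
  have : size (nth (0%R, [::]) bS i).2 <= h2.
    by move/allP: HbS; apply; apply: mem_nth.
  move: HS1 => /= HS1; lia.
have [IH1 IH2] := IH HaS HbS.
case: search IH1 IH2 => r c' /= IH1 IH2; split; first nia.
exact: IH2.
Qed.

Lemma loads_cost (R : realDomainType) (p : nat -> R) sched js :
  (loads p sched js).2 = 2 * size js.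
Proof.
elim: js => //= j js; case: loads => [[a b] c] /= ->.
by case: sched => /=; lia.
Qed.

Lemma A1 c g h k P : c < 2 * h.+1 * g -> h <= k -> g <= 2 * P -> c <= 4 * (k + 1) * P.
Proof.
move=> H1 H2 H3; apply: leq_trans (ltnW H1) _.
have -> : 4 * (k + 1) * P = 2 * (k + 1) * (2 * P) by lia.
by rewrite leq_mul // leq_mul2l addn1 ltnS H2.
Qed.

Lemma A2 c s h k P : c = s * (2 * h + 2) + 1 -> s <= P -> h <= k ->
  c <= (2 * k + 2) * P + 1.
Proof.
move=> -> H1 H2; rewrite leq_add2r mulnC leq_mul //; lia.
Qed.

Lemma A3 c L t h k P : c <= 6 * L * (t.+1 * h) + 1 -> L <= P -> h <= k ->
  c <= 6 * P * ((t + 1) * k) + 1.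
Proof.
move=> H1 H2 H3; apply: leq_trans H1 _; rewrite leq_add2r addn1.
by rewrite leq_mul // ?leq_mul2l ?H2 ?H3 ?orbT.
Qed.

Lemma A4 c sa t h k P : c <= sa * (6 * (t.+1 * h).+1 + 6) + 1 -> sa <= P -> h <= k ->
  c <= P * (6 * ((t + 1) * k + 1) + 6) + 1.
Proof.
move=> H1 H2 H3; apply: leq_trans H1 _; rewrite leq_add2r addn1.
rewrite leq_mul // leq_add2r leq_mul2l addn1 ltnS leq_mul2l H3 orbT //.
Qed.

Arguments A1 {c g h k P}.
Arguments A2 {c s h k P}.
Arguments A3 {c L t h k P}.
Arguments A4 {c sa t h k P}.

Lemma Afin c0 c2 c3 c4 c5 c6 c7 n k P t e :
  c0 = 2 * n -> 1 < n -> n <= P -> 1 <= t -> 1 <= k -> e <= k + 1 ->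
  c2 <= 4 * (k + 1) * P -> c3 <= 4 * (k + 1) * P ->
  c4 <= (2 * k + 2) * P + 1 -> c5 <= (2 * k + 2) * P + 1 ->
  c6 <= 6 * P * ((t + 1) * k) + 1 ->
  c7 <= P * (6 * ((t + 1) * k + 1) + 6) + 1 ->
  c0 + 2 + 2 * n + c2 + c3 + c4 + c5 + c6 + c7 + e <= 100 * k * P * t.
Proof.
move=> H0 Hn HnP Ht Hk He H2 H3 H4 H5 H6 H7.
have HkP : k * P <= k * P * t by rewrite -{1}(muln1 (k * P)) leq_mul2l Ht orbT.
have HP : P <= k * P by rewrite -{1}(mul1n P) leq_mul2r Hk orbT.
have Hk' : k <= k * P by rewrite -{1}(muln1 k) leq_mul2l; apply/orP; right; lia.
have E6 : 6 * P * ((t + 1) * k) = 6 * (k * P * t) + 6 * (k * P) by lia.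
have E7 : P * (6 * ((t + 1) * k + 1) + 6) = 6 * (k * P * t) + 6 * (k * P) + 12 * P by lia.
have E2 : 4 * (k + 1) * P = 4 * (k * P) + 4 * P by lia.
have E4 : (2 * k + 2) * P = 2 * (k * P) + 2 * P by lia.
have E100 : 100 * k * P * t = 100 * (k * P * t) by lia.
rewrite E6 in H6; rewrite E7 in H7; rewrite E2 in H2 H3; rewrite E4 in H4 H5.
rewrite E100.
lia.
Qed.

Arguments Afin {c0 c2 c3 c4 c5 c6 c7 n k P t e}.

Theorem lemma2 :
  exists C N : nat,
    forall (R : realDomainType) (n k : nat) (p : nat -> R) (sched rnd : nat -> bool),
      N <= n -> 1 <= k ->
      (forall j, j < n -> (0 < p j)%R) ->
      (kswap_run n k p sched rnd).2 <= C * k * n ^ uphalf k * trunc_log 2 n.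
Proof.
exists 100, 2 => R n k p sched rnd Hn Hk _.
rewrite /kswap_run.
have := loads_cost R p sched (iota 0 n).
case: loads => [[a b] c0] /= Hc0.
rewrite size_iota in Hc0.
set h1 := uphalf k; set h2 := k./2.
set t := trunc_log 2 n.
set P := n ^ h1.
have Hhk : h1 + h2 = k by rewrite /h1 /h2; lia.
have Hh1 : 1 <= h1 by rewrite /h1; lia.
have Ht : 1 <= t by rewrite /t trunc_log_gt0.
have HnP : n <= P by rewrite /P -{1}(expn1 n) leq_pexp2l //; lia.
have HP2 : n ^ h2 <= P by rewrite /P leq_pexp2l //; lia.
have Hnt : n ^ h2 <= 2 ^ ((t.+1) * h2).
  rewrite expnM; apply: expmono; exact: ltnW (trunc_log_ltn n (isT : 1 < 2)).
set As := [seq j <- iota 0 n | rnd j].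
set Bs := [seq j <- iota 0 n | ~~ rnd j].
have HsA : size As <= n by rewrite size_filter; have := count_size rnd (iota 0 n); rewrite size_iota.
have HsB : size Bs <= n by rewrite size_filter; have := count_size (predC rnd) (iota 0 n); rewrite size_iota.
set w := (fun j : nat => _).
set Delta := (if _ then _ else _).
have CA := choose_cost As h1; have SA := choose_size As h1; have AA := choose_all As h1.
case: (Defs.choose As h1) CA SA AA => ssA c2 /= CA SA AA.
have CB := choose_cost Bs h2; have SB := choose_size Bs h2; have AB := choose_all Bs h2.
case: (Defs.choose Bs h2) CB SB AB => ssB c3 /= CB SB AB.
have WA := weigh_cost R w _ _ AA; have MA := weigh_map R w ssA.
case: (weigh w ssA) WA MA => aS c4 /= WA MA.
have WB := weigh_cost R w _ _ AB; have MB := weigh_map R w ssB.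
case: (weigh w ssB) WB MB => bS0 c5 /= WB MB.
have SaS : size aS = size ssA by rewrite -MA size_map.
have SbS : size bS0 = size ssB by rewrite -MB size_map.
have PaS : all (fun x : R * seq nat => size x.2 <= h1) aS.
  rewrite -(all_map snd (fun T => size T <= h1)) MA.
  by apply: sub_all AA => T /eqP ->.
have PbS0 : all (fun x : R * seq nat => size x.2 <= h2) bS0.
  rewrite -(all_map snd (fun T => size T <= h2)) MB.
  by apply: sub_all AB => T /eqP ->.
have Hpow1 : size As ^ h1 <= P by apply: expmono.
have Hpow2 : size Bs ^ h2 <= n ^ h2 by apply: expmono.
have HL : size bS0 <= 2 ^ ((t.+1) * h2) by lia.
have C6 := @msort_cost R (seq nat) _ (size bS0) bS0 (leqnn _) HL.
have [S6 P6] := msort_prop R (seq nat) (fun x : R * seq nat => size x.2 <= h2) (size bS0) bS0.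
case: (msort_c (size bS0) bS0) C6 S6 P6 => bS c6 /= C6 S6 P6.
have HbS : size bS < 2 ^ ((t.+1) * h2).+1 by rewrite expnS; lia.
have [C7 R7] := @search_prop R bS aS Delta _ h1 h2 HbS PaS (P6 PbS0).
have G1 := gs_mono _ _ h1 HsA; have G1' := gs_le2 _ h1 Hn.
have G2 := gs_mono _ _ h2 HsB; have G2' := gs_le2 _ h2 Hn.
have Hh1k : h1 <= k by lia.
have Hh2k : h2 <= k by lia.
have B2 := A1 CA Hh1k (leq_trans G1 G1').
have B3 := A1 CB Hh2k (leq_trans G2 (leq_trans G2' (leq_mul (leqnn 2) HP2))).
have B4 := A2 WA (leq_trans SA Hpow1) Hh1k.
have B5 := A2 WB (leq_trans SB (leq_trans Hpow2 HP2)) Hh2k.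
have B6 := A3 C6 (leq_trans (eq_leq SbS) (leq_trans SB (leq_trans Hpow2 HP2))) Hh2k.
case: (search bS Delta aS) C7 R7 => [[[S1 S2]|] c7] /= C7 R7.
  have B7 := A4 C7 (leq_trans (eq_leq SaS) (leq_trans SA Hpow1)) Hh2k.
  have HS := R7 S1 S2 erefl.
  have He : size S1 + size S2 + 1 <= k + 1 by lia.
  have F := Afin Hc0 Hn HnP Ht Hk He B2 B3 B4 B5 B6 B7.
  apply: (leq_trans _ F); lia.
have B7 := A4 C7 (leq_trans (eq_leq SaS) (leq_trans SA Hpow1)) Hh2k.
exact: (Afin Hc0 Hn HnP Ht Hk (leq_addl k 1) B2 B3 B4 B5 B6 B7).
Qed.
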